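(* Let $X,Y,Z$ be random variables on finite alphabets $\mathcal{X},\mathcal{Y},\mathcal{Z}$. For each $y\in\mathcal{Y}$ with $\Pr(Y=y)>0$, let $(A_y,B_y,C_y)$ be the random triple on $\mathcal{X}\times\mathcal{Y}\times\mathcal{Z}$ with $$\Pr(A_y=x,B_y=y',C_y=z)=\begin{cases}0 & \text{if } \Pr(Z=z)=0,\\ \dfrac{\Pr(X=x,Y=y',Z=z)\,\Pr(Z=z\mid Y=y)}{\Pr(Z=z)} & \text{otherwise,}\end{cases}$$ and define the unique information $\operatorname{Un}(X\to Z\mid Y)=\sum_{y:\Pr(Y=y)>0}\Pr(Y=y)\,I(A_y;C_y)$. Then $$\operatorname{Un}(X\to Z\mid Y)=\sum_{y:\Pr(Y=y)>0}\Pr(Y=y)\,H(A_y)-H(X\mid Z).$$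
   Context: $H$ is Shannon entropy and $I$ is mutual information. *)

(* Defs.v *)
From HB Require Import structures.
From mathcomp Require Import all_boot all_order all_algebra.
From mathcomp Require Import reals exp.
Set Implicit Arguments. Unset Strict Implicit. Unset Printing Implicit Defensive.
Import Order.TTheory GRing.Theory Num.Theory.
Local Open Scope ring_scope.

Section InfoDefs.
Variable R : realType.

Definition is_distr (T : finType) (p : T -> R) : Prop :=
  (forall t, 0 <= p t) /\ \sum_t p t = 1.

Definition entropy (T : finType) (p : T -> R) : R :=
  - \sum_t (if p t == 0 then 0 else p t * ln (p t)).

Section Triple.
Variables (X Y Z : finType).
Implicit Type P : X * Y * Z -> R.

Definition margX P (x : X) : R := \sum_y \sum_z P (x, y, z).
Definition margY P (y : Y) : R := \sum_x \sum_z P (x, y, z).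
Definition margZ P (z : Z) : R := \sum_x \sum_y P (x, y, z).
Definition margXZ P (xz : X * Z) : R := \sum_y P (xz.1, y, xz.2).
Definition margYZ P (y : Y) (z : Z) : R := \sum_x P (x, y, z).

Definition mutinfoXZ P : R :=
  \sum_x \sum_z
    (if margXZ P (x, z) == 0 then 0
     else margXZ P (x, z) *
          ln (margXZ P (x, z) / (margX P x * margZ P z))).

Definition condentXZ P : R :=
  - \sum_x \sum_z
    (if margXZ P (x, z) == 0 then 0
     else margXZ P (x, z) * ln (margXZ P (x, z) / margZ P z)).

Definition condZY P (y : Y) (z : Z) : R := margYZ P y z / margY P y.

Definition tripleA P (y : Y) (t : X * Y * Z) : R :=
  if margZ P t.2 == 0 then 0
  else P t * condZY P y t.2 / margZ P t.2.

Definition uniqueinfo P : R :=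
  \sum_(y | 0 < margY P y) margY P y * mutinfoXZ (tripleA P y).

End Triple.
End InfoDefs.

(* Main.v *)
Require Import Defs.
From HB Require Import structures.
From mathcomp Require Import all_boot all_order all_algebra.
From mathcomp Require Import reals exp.
From mathcomp.algebra_tactics Require Import ring.
Import Order.TTheory GRing.Theory Num.Theory.
Local Open Scope ring_scope.

Section Helpers.
Variables (R : realType) (X Y Z : finType) (P : X * Y * Z -> R).
Hypothesis P0 : forall t, 0 <= P t.

Lemma pz0 z : margZ P z = 0 -> forall x y, P (x, y, z) = 0.
Proof.
move=> h x y.
have hx : \sum_y P (x, y, z) = 0.
  by apply: (psumr_eq0P _ h) => // i _; apply: sumr_ge0 => j _.
by apply: (psumr_eq0P _ hx).
Qed.

Lemma margY_ge0 y : 0 <= margY P y.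
Proof. by apply: sumr_ge0 => x _; apply: sumr_ge0 => z _. Qed.

Lemma margZ_ge0 z : 0 <= margZ P z.
Proof. by apply: sumr_ge0 => x _; apply: sumr_ge0 => y _. Qed.

Lemma margYZ_ge0 y z : 0 <= margYZ P y z.
Proof. by apply: sumr_ge0 => x _. Qed.

Lemma margXZ_ge0 x z : 0 <= margXZ P (x, z).
Proof. by apply: sumr_ge0 => y _. Qed.

Lemma condZY_ge0 y z : 0 <= condZY P y z.
Proof. by rewrite /condZY divr_ge0 ?margYZ_ge0 ?margY_ge0. Qed.

Lemma py0 y : ~~ (0 < margY P y) -> forall x z, P (x, y, z) = 0.
Proof.
move=> h x z.
have e : margY P y = 0.
  by apply/eqP; rewrite eq_le margY_ge0 andbT leNgt.
have hx : \sum_z P (x, y, z) = 0.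
  by apply: (psumr_eq0P _ e) => // i _; apply: sumr_ge0 => j _.
by apply: (psumr_eq0P _ hx).
Qed.

Lemma qE y x z : margXZ (tripleA P y) (x, z) =
  if margZ P z == 0 then 0
  else margXZ P (x, z) * condZY P y z / margZ P z.
Proof.
rewrite /margXZ /tripleA /=.
case: ifP => _; first by rewrite big1.
by rewrite !mulr_suml.
Qed.

Lemma q_ge0 y x z : 0 <= margXZ (tripleA P y) (x, z).
Proof.
rewrite qE; case: ifP => // _.
by rewrite divr_ge0 ?margZ_ge0 // mulr_ge0 ?margXZ_ge0 ?condZY_ge0.
Qed.

Lemma cZ y z : margZ (tripleA P y) z = condZY P y z.
Proof.
rewrite /margZ.
transitivity (\sum_x margXZ (tripleA P y) (x, z)) => //.
under eq_bigr do rewrite qE.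
have [h|h] := eqVneq (margZ P z) 0.
  rewrite big1 // /condZY /margYZ big1 ?mul0r // => x _.
  exact: pz0.
rewrite -!mulr_suml.
change (\sum_i margXZ P (i, z)) with (margZ P z).
by rewrite mulrAC divff // mul1r.
Qed.

Definition L (x : X) (z : Z) : R :=
  if margXZ P (x, z) == 0 then 0 else ln (margXZ P (x, z) / margZ P z).

Lemma margXE (Q : X * Y * Z -> R) x :
  margX Q x = \sum_z margXZ Q (x, z).
Proof. by rewrite /margX exchange_big. Qed.

Lemma mi y : mutinfoXZ (tripleA P y) =
  \sum_x \sum_z margXZ (tripleA P y) (x, z) * L x z
  + entropy (margX (tripleA P y)).
Proof.
set Q := tripleA P y.
have -> : entropy (margX Q) =
    - \sum_x \sum_z margXZ Q (x, z) * ln (margX Q x).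
  rewrite /entropy; congr (- _); apply: eq_bigr => x _.
  rewrite -mulr_suml -margXE.
  by case: eqP => // ->; rewrite mul0r.
rewrite /mutinfoXZ -sumrN -big_split /=; apply: eq_bigr => x _.
rewrite -sumrN -big_split /=; apply: eq_bigr => z _.
have [hq|hq] := eqVneq (margXZ Q (x, z)) 0.
  by rewrite hq ?eqxx !mul0r subrr.
rewrite ?(negbTE hq).
have hq' := hq; rewrite /Q qE in hq'.
move: hq'; case: ifP => [_|hp]; first by rewrite eqxx.
move=> hq'.
have hpxz : margXZ P (x, z) != 0.
  by apply: contra hq' => /eqP ->; rewrite !mul0r.
have hc : condZY P y z != 0.
  by apply: contra hq' => /eqP ->; rewrite mulr0 mul0r.
have pp : 0 < margZ P z by rewrite lt0r hp margZ_ge0.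
have ppxz : 0 < margXZ P (x, z) by rewrite lt0r hpxz margXZ_ge0.
have pc : 0 < condZY P y z by rewrite lt0r hc condZY_ge0.
have qpos : 0 < margXZ Q (x, z) by rewrite lt0r hq q_ge0.
have apos : 0 < margX Q x.
  rewrite margXE (bigD1 z) //=.
  by apply: ltr_wpDr => //; apply: sumr_ge0 => i _; apply: q_ge0.
rewrite /L (negbTE hpxz) cZ.
have -> : margXZ Q (x, z) / (margX Q x * condZY P y z) =
          (margXZ P (x, z) / margZ P z) * (margX Q x)^-1.
  rewrite /Q qE hp.
  field.
  by rewrite (negbTE (lt0r_neq0 apos)) hc hp.
rewrite lnM ?posrE ?invr_gt0 ?divr_gt0 // lnV ?posrE //.
by rewrite mulrBr.
Qed.

Lemma W x z :
  \sum_(y | 0 < margY P y) margY P y * margXZ (tripleA P y) (x, z) =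
  margXZ P (x, z).
Proof.
under eq_bigr do rewrite qE.
have [h|h] := eqVneq (margZ P z) 0.
  rewrite big1 => [|y _]; last by rewrite ?h ?eqxx ?mulr0.
  by rewrite /margXZ big1 // => y _; apply: pz0.
transitivity (\sum_(y | 0 < margY P y)
                 margXZ P (x, z) / margZ P z * margYZ P y z).
  apply: eq_bigr => y hy; rewrite /condZY.
  field.
  by rewrite (negbTE (lt0r_neq0 hy)) h.
rewrite -mulr_sumr.
have -> : \sum_(y | 0 < margY P y) margYZ P y z = margZ P z.
  rewrite big_mkcond /=.
  transitivity (\sum_y margYZ P y z).
    apply: eq_bigr => y _; case: ifP => // hy.
    by rewrite /margYZ big1 // => x' _; apply: py0; rewrite hy.
  by rewrite /margYZ /margZ exchange_big.
by rewrite divfK.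
Qed.

End Helpers.

Theorem corollary1 (R : realType) (X Y Z : finType) (P : X * Y * Z -> R)
  (HP : is_distr P) :
  uniqueinfo P =
  \sum_(y | 0 < margY P y) margY P y * entropy (margX (tripleA P y))
  - condentXZ P.
Proof.
have P0 := HP.1.
have HS : \sum_(y | 0 < margY P y) margY P y *
   (\sum_x \sum_z margXZ (tripleA P y) (x, z) * L _ _ _ _ P x z)
   = - condentXZ P.
  rewrite /condentXZ opprK.
  under eq_bigr do rewrite mulr_sumr.
  rewrite exchange_big; apply: eq_bigr => x _.
  under eq_bigr do rewrite mulr_sumr.
  rewrite exchange_big; apply: eq_bigr => z _.
  under eq_bigr do rewrite mulrA.
  rewrite -mulr_suml (@W _ _ _ _ P P0) /L.
  by case: ifP => [/eqP ->|]; rewrite ?mulr0 ?mul0r.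
rewrite /uniqueinfo.
under eq_bigr do rewrite (@mi _ _ _ _ P P0) mulrDr.
rewrite big_split /= HS addrC.
by [].
Qed.
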